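(* Let $d\le n$, $\beta\in\mathbb{R}^d$, $\epsilon\in\mathbb{R}^n$, $X\in\mathbb{R}^{n\times d}$, $G_n\subseteq\{1,\dots,n\}$, and $o\in\mathbb{R}^n$ with $o_i=0$ for all $i\notin G_n$; set $Y:=X\beta+\epsilon+o$. Assume there is a known $c_n\in\mathbb{N}$ with $|G_n|\le c_n$, let $a_n:=n-c_n$, and let $S_t$ be the set computed in the final iteration of Torrent run on $X,Y$ with threshold parameter $a_n$, and $\hat\beta^{n,a_n}_{\mathrm{Tor}}$ its output. For $S\subseteq\{1,\dots,n\}$ let $V(S):=(S\cup G_n^{\mathsf c})\setminus(G_n^{\mathsf c}\cap S)$, where $G_n^{\mathsf c}=\{1,\dots,n\}\setminus G_n$. Assume \[ \eta:=\max_{S\subseteq\{1,\dots,n\},\,|S|=a_n}\frac{\|X_{V(S)}\|_2}{\sqrt{\lambda_{\min}(X_S^\top X_S)}}<\frac{1}{\sqrt2}. \] Then \[ \|\hat\beta^{n,a_n}_{\mathrm{Tor}}-\beta\|_2\le\big\|(X_{S_t}^\top X_{S_t})^{-1}X_{S_t}^\top\epsilon_{S_t}\big\|_2+\frac{\sqrt2\|X_{V(S_t)}\|_2\big\|(X_{S_t}^\top X_{S_t})^{-1}X_{S_t}^\top\epsilon_{S_t}\big\|_2+\sqrt2\|\epsilon_{V(S_t)}\|_2}{\sqrt{\lambda_{\min}(X_{S_t}^\top X_{S_t})}\,(1-\sqrt2\eta)}. \]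
   Context: $\lambda_{\min}$ denotes the minimal eigenvalue and $\|\cdot\|_2$ the Euclidean norm for vectors and the spectral norm for matrices; $X_S,\epsilon_S$ denote rows/entries with indices in $S$. $\hat\beta^S_{\mathrm{OLS}}(X,Y):=(X_S^\top X_S)^{+}X_S^\top Y_S$. $\mathrm{HT}(v,a)$ is the set of indices of the $a$ smallest entries of $v$, ties broken by a fixed deterministic rule. Torrent with threshold $a$: $S_0=\{1,\dots,n\}$, $e=Y$, $\mathrm{err}=\infty$, $t=0$; while $\|e\|_2<\mathrm{err}$ (with $e$ indexed by the current set $S_t$): $t\gets t+1$, $\mathrm{err}\gets\|e\|_2$, $\hat\beta^t\gets\hat\beta^{S_{t-1}}_{\mathrm{OLS}}(X,Y)$, $v\gets|Y-X\hat\beta^t|$, $S_t\gets\mathrm{HT}(v,a)$, $e\gets|Y_{S_t}-X_{S_t}\hat\beta^t|$; output $\hat\beta^{n,a}_{\mathrm{Tor}}:=\hat\beta^t$. *)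

(* Defs.v *)
From HB Require Import structures.
From mathcomp Require Import all_boot all_order all_algebra.
From mathcomp Require Import all_classical all_reals.
Set Implicit Arguments.
Unset Strict Implicit.
Unset Printing Implicit Defensive.
Import Order.TTheory GRing.Theory Num.Theory.
Local Open Scope classical_set_scope.
Local Open Scope ring_scope.

Section TorrentDefs.
Variable R : realType.

Definition vnorm m (v : 'cV[R]_m) : R := Num.sqrt (\sum_i v i 0 ^+ 2).

Definition specnorm m k (A : 'M[R]_(m, k)) : R :=
  sup ((fun v : 'cV[R]_k => vnorm (A *m v)) @` [set v | vnorm v = 1]).

Definition lmin k (A : 'M[R]_k) : R := inf [set a : R | eigenvalue A a].

Definition is_mp_pinv k (A B : 'M[R]_k) : Prop :=
  [/\ A *m B *m A = A, B *m A *m B = B,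
      (A *m B)^T = A *m B & (B *m A)^T = B *m A].
Definition mp_pinv k (A : 'M[R]_k) : 'M[R]_k := xget 0 [set B | is_mp_pinv A B].

(* Row restriction to S: rows outside S are replaced by zero rows.
   X_S below is encoded as (rmask S *m X), Y_S as (rmask S *m Y). *)
Definition rmask n (S : {set 'I_n}) : 'M[R]_n :=
  diag_mx (\row_i (if i \in S then 1 else 0)).

Definition sub_rows n k (S : {set 'I_n}) (A : 'M[R]_(n, k)) : 'M[R]_(n, k) :=
  rmask S *m A.

Definition ols n d (S : {set 'I_n}) (X : 'M[R]_(n, d)) (Y : 'cV[R]_n) : 'cV[R]_d :=
  mp_pinv ((sub_rows S X)^T *m sub_rows S X) *m (sub_rows S X)^T *m sub_rows S Y.

Definition absv n (v : 'cV[R]_n) : 'cV[R]_n := map_mx (fun x => `|x|) v.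

(* ht is a hard-thresholding rule HT(., a): it returns a set of a indices of
   smallest entries (any fixed deterministic tie-breaking rule). *)
Definition is_HT n (a : nat) (ht : 'cV[R]_n -> {set 'I_n}) : Prop :=
  forall v : 'cV[R]_n, #|ht v| = a /\
    (forall i j, i \in ht v -> j \notin ht v -> v i 0 <= v j 0).

Fixpoint torrent_iter n d (ht : 'cV[R]_n -> {set 'I_n}) (X : 'M[R]_(n, d))
    (Y : 'cV[R]_n) (fuel : nat) (Sprev : {set 'I_n}) (err : R)
    : 'cV[R]_d * {set 'I_n} :=
  let b := ols Sprev X Y in
  let S := ht (absv (Y - X *m b)) in
  let en := vnorm (sub_rows S (Y - X *m b)) in
  match fuel with
  | k.+1 => if en < err then torrent_iter ht X Y k S en else (b, S)
  | 0 => (b, S)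
  end.

(* Torrent with S_0 = [n], e = Y, err = oo: the first iteration is always
   performed; afterwards the loop runs while ||e|| decreases strictly.
   Since err_t is a function of S_{t-1} and strictly decreases, at most 2^n
   continuations are possible, so the fuel 2^n.+1 is never exhausted.
   Output: (hat beta_Tor, S_t of the final iteration). *)
Definition torrent n d (ht : 'cV[R]_n -> {set 'I_n}) (X : 'M[R]_(n, d))
    (Y : 'cV[R]_n) : 'cV[R]_d * {set 'I_n} :=
  torrent_iter ht X Y (2 ^ n).+1 [set: 'I_n]%SET (vnorm Y).

Definition Vset n (G S : {set 'I_n}) : {set 'I_n} :=
  (S :|: ~: G) :\: (~: G :&: S).

Definition eta_tor n d (G : {set 'I_n}) (a : nat) (X : 'M[R]_(n, d)) : R :=
  \big[Num.max/0]_(S : {set 'I_n} | #|S| == a)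
     (specnorm (sub_rows (Vset G S) X)
       / Num.sqrt (lmin ((sub_rows S X)^T *m sub_rows S X))).

End TorrentDefs.

(* Main.v *)
Require Import Defs.
From HB Require Import structures.
From mathcomp Require Import all_boot all_order all_algebra.
From mathcomp Require Import all_classical all_reals.
From mathcomp Require Import complex.
From mathcomp Require Import ring lra zify.
Import Order.TTheory GRing.Theory Num.Theory.
Local Open Scope ring_scope.
Set Implicit Arguments. Unset Strict Implicit.

Section Ray.
Variable R : realType.
Local Notation C := (R[i]).
Local Notation f := (real_complex R).

Lemma freal (x : R) : f x \is Num.real.
Proof. by rewrite complex_real. Qed.

Lemma fconj (x : R) : (f x)^* = f x.
Proof. exact: conj_Creal (freal x). Qed.

Lemma herm k (A : 'M[R]_k) : A^T = A -> map_mx f A \is hermsymmx.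
Proof.
move=> hA; apply: realsym_hermsym.
  by apply/is_hermitianmxP; rewrite expr0 scale1r map_mx_id // map_trmx hA.
by apply/mxOverP => i j; rewrite mxE freal.
Qed.

Local Open Scope sesquilinear_scope.

Lemma tcM m n p (A : 'M[C]_(m, n)) (B : 'M[C]_(n, p)) :
  (A *m B)^t* = B^t* *m A^t*.
Proof. by rewrite trmx_mul map_mxM. Qed.

Lemma rowpos m (x : 'rV[R]_m) : x != 0 -> 0 < (x *m x^T) 0 0.
Proof.
move=> xn0; rewrite mxE lt_def sumr_ge0 ?andbT; last by move=> i _; by rewrite mxE -expr2 sqr_ge0.
apply: contra xn0 => /eqP h; apply/eqP/matrixP => i j; rewrite ord1 mxE.
have hge : forall l : 'I_m, true -> 0 <= x 0 l * x^T l 0.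
  by move=> l _; rewrite mxE -expr2 sqr_ge0.
have := @psumr_eq0P _ _ _ _ hge h j isT; rewrite mxE => /eqP; rewrite mulf_eq0 orbb => /eqP.
done.
Qed.

Lemma rayleigh k (A : 'M[R]_k.+1) : A^T = A ->
  exists mu, [/\ eigenvalue A mu, (forall a, eigenvalue A a -> mu <= a) &
    forall v : 'cV[R]_k.+1, mu * (v^T *m v) 0 0 <= (v^T *m A *m v) 0 0].
Proof.
move=> hA.
set AC := map_mx f A.
have hH : AC \is hermsymmx := herm hA.
have /orthomx_spectralP hAC := hermitian_normalmx hH.
move: hAC.
set P := spectralmx AC; set D := spectral_diag AC => hAC.
have hPu : P \is unitarymx := spectral_unitarymx AC.
have hPinv : invmx P = P^t* := invmx_unitary hPu.
have hPunit : P \in unitmx := unitarymx_unit hPu.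
have hDr := hermitian_spectral_diag_real hH.
pose dd j := complex.Re (D 0 j).
have hD j : D 0 j = f (dd j).
  by rewrite /dd RRe_real //; exact: (mxOverP hDr 0 j).
pose j0 := [arg min_(j < ord0) dd j]%O.
have hj0 : forall j, dd j0 <= dd j.
  by move=> j; rewrite /j0; case: arg_minP => // i _ H; apply: H.
have key : forall u : 'rV[C]_k.+1,
    f (dd j0) * (u *m u^t*) 0 0 <= (u *m AC *m u^t*) 0 0.
  move=> u.
  set y := u *m P^t*.
  have hy : u *m AC *m u^t* = y *m diag_mx D *m y^t*.
    rewrite hAC hPinv /y tcM trmxCK !mulmxA //.
  have hyy : y *m y^t* = u *m u^t*.
    by rewrite /y tcM trmxCK mulmxA mulmxKtV.
  rewrite hy -hyy !mxE big_distrr /=; apply: ler_sum => j _.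
  rewrite mul_mx_diag !mxE hD.
  set z := (\sum_j1 _)%R.
  rewrite mulrAC [X in X <= _]mulrC; apply: ler_wpM2l; first exact: mul_conjC_ge0.
  by rewrite lecR.
have realq : forall v : 'cV[R]_k.+1,
    dd j0 * (v^T *m v) 0 0 <= (v^T *m A *m v) 0 0.
  move=> v; have := key (map_mx f v^T).
  have -> : (map_mx f v^T)^t* = map_mx f v.
    by apply/matrixP => i j; rewrite !mxE fconj.
  by rewrite /AC -!map_mxM !mxE -rmorphM lecR.
exists (dd j0); split => //.
- rewrite -(eigenvalue_map (real_complex R)) /=. rewrite -hD -/AC.
  apply/eigenvalueP; exists (delta_mx 0 j0 *m P).
    rewrite hAC !mulmxA mulmxK //.
    have -> : delta_mx 0 j0 *m diag_mx D = D 0 j0 *: delta_mx (0 : 'I_1) j0.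
      apply/matrixP => i j; rewrite mul_mx_diag !mxE.
      by case: (eqVneq j j0) => [->|hj]; rewrite ?andbT ?andbF ?mul0r ?mulr0 // mulrC.
    by rewrite scalemxAl.
  apply/eqP => /(congr1 (mulmx^~ (invmx P))); rewrite mulmxK // mul0mx.
  move/matrixP => /(_ 0 j0); rewrite !mxE !eqxx /= => /eqP; rewrite oner_eq0 //.
- move=> a /eigenvalueP [x hx xn0].
  have := realq x^T; rewrite trmxK hx -scalemxAl [X in _ <= X]mxE.
  by rewrite ler_pM2r // rowpos.
Qed.
End Ray.

Section Base.
Variable R : realType.

Definition dotv m (u v : 'cV[R]_m) : R := \sum_i u i 0 * v i 0.

Lemma dotvE m (u v : 'cV[R]_m) : (u^T *m v) 0 0 = dotv u v.
Proof. by rewrite mxE; apply: eq_bigr => i _; rewrite mxE. Qed.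

Lemma dotvC m (u v : 'cV[R]_m) : dotv u v = dotv v u.
Proof. by apply: eq_bigr => i _; rewrite mulrC. Qed.

Lemma dotvDl m (u v w : 'cV[R]_m) : dotv (u + v) w = dotv u w + dotv v w.
Proof. by rewrite /dotv -big_split; apply: eq_bigr => i _; rewrite mxE mulrDl. Qed.

Lemma dotvNl m (u w : 'cV[R]_m) : dotv (- u) w = - dotv u w.
Proof. by rewrite /dotv -sumrN; apply: eq_bigr => i _; rewrite mxE mulNr. Qed.

Lemma dotvZl m a (u w : 'cV[R]_m) : dotv (a *: u) w = a * dotv u w.
Proof. by rewrite /dotv mulr_sumr; apply: eq_bigr => i _; rewrite mxE mulrA. Qed.

Lemma dotv_ge0 m (u : 'cV[R]_m) : 0 <= dotv u u.
Proof. by apply: sumr_ge0 => i _; rewrite -expr2 sqr_ge0. Qed.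

Lemma dotv_eq0 m (u : 'cV[R]_m) : dotv u u = 0 -> u = 0.
Proof.
move=> h; apply/matrixP => i j; rewrite ord1 mxE.
have hge : forall l : 'I_m, true -> 0 <= u l 0 * u l 0.
  by move=> l _; rewrite -expr2 sqr_ge0.
by have /eqP := @psumr_eq0P _ _ _ _ hge h i isT; rewrite mulf_eq0 orbb => /eqP.
Qed.

Lemma vnormE m (u : 'cV[R]_m) : vnorm u = Num.sqrt (dotv u u).
Proof. by rewrite /vnorm /dotv; congr Num.sqrt; apply: eq_bigr => i _; rewrite expr2. Qed.

Lemma vnorm_ge0 m (u : 'cV[R]_m) : 0 <= vnorm u.
Proof. by rewrite vnormE sqrtr_ge0. Qed.

Lemma vnorm_sq m (u : 'cV[R]_m) : vnorm u ^+ 2 = dotv u u.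
Proof. by rewrite vnormE sqr_sqrtr // dotv_ge0. Qed.

Lemma CS m (u v : 'cV[R]_m) : dotv u v ^+ 2 <= dotv u u * dotv v v.
Proof.
set a := dotv u u; set b := dotv u v; set c := dotv v v.
have h0 : 0 <= dotv (b *: u - a *: v) (b *: u - a *: v) := dotv_ge0 _.
have hba : dotv v u = b by rewrite dotvC.
rewrite dotvDl dotvNl !dotvZl !(dotvC _ (b *: u - a *: v)) !dotvDl !dotvNl !dotvZl in h0.
rewrite -/a -/c hba in h0.
have e : b * (b * a - a * b) - a * (b * b - a * c) = a * (a * c - b ^+ 2).
  by rewrite expr2; ring.
rewrite -/b e in h0.
have [a0|apos] := eqVneq a 0.
  have u0 := dotv_eq0 a0.
  have b0 : b = 0 by rewrite /b u0 /dotv big1 // => i _; rewrite mxE mul0r.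
  by rewrite b0 a0 expr0n mul0r.
have apos' : 0 < a by rewrite lt_def apos dotv_ge0.
by rewrite -subr_ge0; rewrite pmulr_rge0 in h0.
Qed.

Lemma CS_abs m (u v : 'cV[R]_m) : `|dotv u v| <= vnorm u * vnorm v.
Proof.
rewrite -(ler_pXn2r (_ : 0 < 2)%N) ?nnegrE ?mulr_ge0 ?vnorm_ge0 //.
by rewrite real_normK ?num_real // exprMn !vnorm_sq CS.
Qed.

Lemma vnorm_triangle m (u v : 'cV[R]_m) : vnorm (u + v) <= vnorm u + vnorm v.
Proof.
rewrite -(ler_pXn2r (_ : 0 < 2)%N) ?nnegrE ?addr_ge0 ?vnorm_ge0 //.
rewrite vnorm_sq sqrrD !vnorm_sq dotvDl !(dotvC _ (u + v)) !dotvDl (dotvC v u).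
have := CS_abs u v; have := ler_norm (dotv u v) => h1 h2.
have h3 : dotv u v <= vnorm u * vnorm v := le_trans h1 h2.
rewrite mulr2n; lra.
Qed.


Lemma rmaskE n k (S : {set 'I_n}) (A : 'M[R]_(n, k)) i j :
  (sub_rows S A) i j = (i \in S)%:R * A i j.
Proof. by rewrite /sub_rows /rmask mul_diag_mx !mxE; case: (i \in S). Qed.

Lemma rmask_tr n (S : {set 'I_n}) : (rmask R S)^T = rmask R S.
Proof. by rewrite /rmask tr_diag_mx. Qed.

Lemma rmaskK n (S : {set 'I_n}) : rmask R S *m rmask R S = rmask R S.
Proof.
apply/matrixP => i j; rewrite mul_diag_mx !mxE.
by case: (i \in S); rewrite ?mul1r ?mul0r ?mul0rn.
Qed.

Lemma rmaskT n : rmask R [set: 'I_n]%SET = 1%:M.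
Proof.
by apply/matrixP => i j; rewrite !mxE inE.

Qed.

Lemma sub_rowsT n k (A : 'M[R]_(n, k)) : sub_rows [set: 'I_n]%SET A = A.
Proof. by rewrite /sub_rows rmaskT mul1mx. Qed.

Lemma tr_sub_rows n k p (S : {set 'I_n}) (A : 'M[R]_(n, k)) (B : 'M[R]_(n, p)) :
  (sub_rows S A)^T *m sub_rows S B = A^T *m sub_rows S B.
Proof.
by rewrite /sub_rows trmx_mul rmask_tr -mulmxA [rmask R S *m (rmask R S *m B)]mulmxA rmaskK.
Qed.

Lemma sub_rowsM n k p (S : {set 'I_n}) (A : 'M[R]_(n, k)) (B : 'M[R]_(k, p)) :
  sub_rows S (A *m B) = sub_rows S A *m B.
Proof. by rewrite /sub_rows mulmxA. Qed.

Lemma sub_rowsD n k (S : {set 'I_n}) (A B : 'M[R]_(n, k)) :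
  sub_rows S (A + B) = sub_rows S A + sub_rows S B.
Proof. by rewrite /sub_rows mulmxDr. Qed.

Lemma sub_rowsB n k (S : {set 'I_n}) (A B : 'M[R]_(n, k)) :
  sub_rows S (A - B) = sub_rows S A - sub_rows S B.
Proof. by rewrite /sub_rows mulmxBr. Qed.

Lemma dot_mask n (S : {set 'I_n}) (v : 'cV[R]_n) :
  dotv (sub_rows S v) (sub_rows S v) = \sum_(i in S) v i 0 ^+ 2.
Proof.
rewrite /dotv [RHS]big_mkcond /=; apply: eq_bigr => i _; rewrite !rmaskE.
by case: (i \in S); rewrite ?mul1r ?mul0r ?expr2.
Qed.

Lemma dot_all n (v : 'cV[R]_n) : dotv v v = \sum_i v i 0 ^+ 2.
Proof. by apply: eq_bigr => i _; rewrite expr2. Qed.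

Lemma mp_pinv_unit k (A : 'M[R]_k) : A \in unitmx -> mp_pinv A = invmx A.
Proof.
move=> hu; rewrite /mp_pinv.
have ex : exists B, is_mp_pinv A B.
  exists (invmx A); split.
  - by rewrite mulmxV ?mul1mx.
  - by rewrite mulVmx ?mul1mx.
  - by rewrite mulmxV ?trmx1.
  - by rewrite mulVmx ?trmx1.
have := xgetPex 0 ex; set B := xget _ _; case => h1 _ _ _.
have := congr1 (fun M => invmx A *m M *m invmx A) h1.
by rewrite /= !mulmxA mulVmx // !mul1mx mulmxK.
Qed.

Lemma unit_inj m k (B : 'M[R]_(m, k)) :
  (forall v : 'cV[R]_k, B *m v = 0 -> v = 0) -> B^T *m B \in unitmx.
Proof.
move=> hinj; apply/negPn/negP => hn.
have hdet : \det (B^T *m B) == 0 by move: hn; rewrite unitmxE unitfE negbK.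
have [u un0 hu] := det0P hdet.
have hv : B^T *m B *m u^T = 0.
  have := congr1 trmx hu; rewrite trmx_mul !trmx_mul trmxK trmx0 => <-.
  by [].
have hBv : B *m u^T = 0.
  apply: dotv_eq0; rewrite -dotvE trmx_mul -mulmxA [B^T *m _]mulmxA hv.
  by rewrite mulmx0 mxE.
have := hinj _ hBv => /(congr1 trmx); rewrite trmxK trmx0 => u0.
by rewrite u0 eqxx in un0.
Qed.

End Base.

Section P2.
Variable R : realType.

Lemma lmin_ray k (A : 'M[R]_k) : A^T = A ->
  forall v : 'cV_k, lmin A * dotv v v <= dotv v (A *m v).
Proof.
case: k A => [|k] A hA v.
  by rewrite /dotv !big_ord0 mulr0.
have [mu [hmu hlb hq]] := rayleigh hA.
have -> : lmin A = mu.
  rewrite /lmin; apply/le_anti/andP; split.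
    apply: (ge_inf _ hmu); exists mu => y; exact: hlb.
  by apply: lb_le_inf; [exists mu | move=> y; exact: hlb].
by have := hq v; rewrite -mulmxA !dotvE.
Qed.

Lemma gram_sym m k (B : 'M[R]_(m, k)) : (B^T *m B)^T = B^T *m B.
Proof. by rewrite trmx_mul trmxK. Qed.

Lemma lmin_inj m k (B : 'M[R]_(m, k)) : 0 < lmin (B^T *m B) ->
  forall v : 'cV_k, B *m v = 0 -> v = 0.
Proof.
move=> hl v hv; apply: dotv_eq0.
have := lmin_ray (gram_sym B) v; rewrite -mulmxA hv mulmx0.
have -> : dotv v 0 = 0 by rewrite /dotv big1 // => i _; rewrite mxE mulr0.
move=> h; apply/eqP; rewrite eq_le dotv_ge0 andbT.
by rewrite -(pmulr_rle0 _ hl).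
Qed.

Lemma quad_bound m k (B : 'M[R]_(m, k)) (v : 'cV_k) (u : 'cV_m) :
  B^T *m B *m v = B^T *m u ->
  lmin (B^T *m B) * dotv v v <= dotv u u.
Proof.
move=> h.
have h1 := lmin_ray (gram_sym B) v.
have e : dotv v (B^T *m B *m v) = dotv (B *m v) (B *m v).
  by rewrite -!dotvE trmx_mul !mulmxA.
have e2 : dotv v (B^T *m B *m v) = dotv (B *m v) u.
  by rewrite h -!dotvE trmx_mul !mulmxA.
have hcs := CS (B *m v) u.
set q := dotv (B *m v) (B *m v) in e hcs.
have q0 : 0 <= q := dotv_ge0 _.
have hqq : q ^+ 2 <= q * dotv u u by rewrite -{1}e e2.
have hqu : q <= dotv u u.
  have [->|qn0] := eqVneq q 0; first exact: dotv_ge0.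
  have qp : 0 < q by rewrite lt_def qn0 q0.
  by rewrite -(ler_pM2l qp) -expr2.
by rewrite e in h1; exact: le_trans h1 hqu.
Qed.

Lemma K3 (I : finType) (F : I -> R) (P Q : {set I}) :
  (#|P| <= #|Q|)%N -> (forall i j, i \in P -> j \in Q -> F i <= F j) ->
  (forall i, 0 <= F i) -> \sum_(i in P) F i <= \sum_(i in Q) F i.
Proof.
move=> hc hle h0.
have hQ0 : 0 <= \sum_(i in Q) F i by apply: sumr_ge0.
have [q0|qpos] := posnP #|Q|.
  have : #|P| == 0%N by rewrite -leqn0 (leq_trans hc) // q0.
  rewrite cards_eq0 => /eqP ->.
  by rewrite big_set0.
have e1 : (\sum_(i in P) F i) *+ #|Q| = \sum_(i in P) \sum_(j in Q) F i.
  by rewrite -sumrMnl; apply: eq_bigr => i _; rewrite sumr_const.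
have e2 : \sum_(i in P) \sum_(j in Q) F j = (\sum_(i in Q) F i) *+ #|P|.
  by rewrite sumr_const.
have h1 : \sum_(i in P) \sum_(j in Q) F i <= \sum_(i in P) \sum_(j in Q) F j.
  by apply: ler_sum => i hi; apply: ler_sum => j hj; apply: hle.
have h2 : (\sum_(i in Q) F i) *+ #|P| <= (\sum_(i in Q) F i) *+ #|Q|.
  by rewrite -[X in X <= _]mulr_natr -[X in _ <= X]mulr_natr ler_wpM2l // ler_nat.
rewrite -(ler_pMn2r qpos) e1; apply: (le_trans h1); rewrite e2; exact: h2.
Qed.

End P2.

Section P3.
Variable R : realType.
Variables (n d : nat) (X : 'M[R]_(n, d)) (Y : 'cV[R]_n).

Definition AT (T : {set 'I_n}) := (sub_rows T X)^T *m sub_rows T X.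

Lemma olsE T : AT T \in unitmx ->
  ols T X Y = invmx (AT T) *m (sub_rows T X)^T *m sub_rows T Y.
Proof. by move=> hu; rewrite /ols mp_pinv_unit. Qed.

Lemma normal_eq T : AT T \in unitmx ->
  (sub_rows T X)^T *m sub_rows T (Y - X *m ols T X Y) = 0.
Proof.
move=> hu; rewrite sub_rowsB sub_rowsM olsE // mulmxBr.
rewrite [X in _ - X]mulmxA -/(AT T) -[invmx _ *m _ *m _]mulmxA mulKVmx //.
by rewrite subrr.
Qed.

Lemma lsq T c : AT T \in unitmx ->
  dotv (sub_rows T (Y - X *m c)) (sub_rows T (Y - X *m c)) =
  dotv (sub_rows T (Y - X *m ols T X Y)) (sub_rows T (Y - X *m ols T X Y)) +
  dotv (sub_rows T X *m (ols T X Y - c)) (sub_rows T X *m (ols T X Y - c)).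
Proof.
move=> hu.
set r := sub_rows T (Y - X *m ols T X Y).
set s := sub_rows T X *m (ols T X Y - c).
have e : sub_rows T (Y - X *m c) = r + s.
  by rewrite /r /s !sub_rowsB !sub_rowsM mulmxBr addrA subrK.
have rs : dotv r s = 0.
  rewrite -dotvE /s mulmxA.
  have -> : r^T *m sub_rows T X = 0.
    by rewrite -[sub_rows T X]trmxK -trmx_mul normal_eq // trmx0.
  by rewrite mul0mx mxE.
rewrite e dotvDl !(dotvC _ (r + s)) !dotvDl (dotvC s r) rs; ring.
Qed.

End P3.

Section HT.
Variable R : realType.
Variables (n a : nat) (ht : 'cV[R]_n -> {set 'I_n}) (hht : is_HT a ht).

Lemma ht_sq (r : 'cV[R]_n) i j : i \in ht (absv r) -> j \notin ht (absv r) ->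
  r i 0 ^+ 2 <= r j 0 ^+ 2.
Proof.
move=> hi hj; have [_ h] := hht (absv r); have := h i j hi hj; rewrite !mxE => hle.
rewrite -[r i 0 ^+ 2]real_normK ?num_real // -[r j 0 ^+ 2]real_normK ?num_real //.
by rewrite ler_pXn2r ?nnegrE.
Qed.

Lemma ht_card r : #|ht r| = a.
Proof. by have [h _] := hht r. Qed.

Lemma ht_min (r : 'cV[R]_n) (T : {set 'I_n}) : #|T| = a ->
  \sum_(i in ht (absv r)) r i 0 ^+ 2 <= \sum_(i in T) r i 0 ^+ 2.
Proof.
move=> hT; set S := ht (absv r).
rewrite (big_setID T) [X in _ <= X](big_setID S) /= (finset.setIC S T) lerD2l.
apply: K3.
- rewrite !cardsD (finset.setIC T S) ht_card hT //.
- move=> i j; rewrite !inE => /andP[_ hi] /andP[hj _]; exact: ht_sq.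
- by move=> i; rewrite sqr_ge0.
Qed.

End HT.

Section P4.
Variable R : realType.

Lemma vnormZ m a (v : 'cV[R]_m) : vnorm (a *: v) = `|a| * vnorm v.
Proof.
rewrite !vnormE dotvZl dotvC dotvZl mulrA -expr2 sqrtrM ?sqr_ge0 //.
by rewrite sqrtr_sqr.
Qed.

Lemma vnorm0 m : vnorm (0 : 'cV[R]_m) = 0.
Proof. by rewrite vnormE /dotv big1 ?sqrtr0 // => i _; rewrite mxE mul0r. Qed.

Lemma vnorm_eq0 m (v : 'cV[R]_m) : vnorm v = 0 -> v = 0.
Proof.
move=> h; apply: dotv_eq0; rewrite -vnorm_sq h; by rewrite expr0n.
Qed.

Lemma dot_Mv m k (A : 'M[R]_(m, k)) (u : 'cV[R]_k) :
  dotv (A *m u) (A *m u) <= (\sum_i dotv (row i A)^T (row i A)^T) * dotv u u.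
Proof.
rewrite mulr_suml; apply: ler_sum => i _.
have -> : (A *m u) i 0 = dotv (row i A)^T u.
  by rewrite mxE; apply: eq_bigr => j _; rewrite !mxE.
by rewrite -expr2; exact: CS.
Qed.

Lemma specnormP m k (A : 'M[R]_(m, k)) (v : 'cV[R]_k) :
  vnorm (A *m v) <= specnorm A * vnorm v.
Proof.
have [->|vn0] := eqVneq v 0; first by rewrite mulmx0 !vnorm0 mulr0.
have vpos : 0 < vnorm v.
  rewrite lt_def vnorm_ge0 andbT; apply/eqP => /vnorm_eq0 h; by rewrite h eqxx in vn0.
set u := (vnorm v)^-1 *: v.
have hu : vnorm u = 1.
  by rewrite /u vnormZ ger0_norm ?invr_ge0 ?vnorm_ge0 // mulVf // gt_eqF.
set K := \sum_i dotv (row i A)^T (row i A)^T.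
have hub : has_ubound ((fun w : 'cV[R]_k => vnorm (A *m w)) @` [set w | vnorm w = 1]).
  exists (Num.sqrt K) => y [w hw <-].
  rewrite vnormE ler_sqrt; last by apply: sumr_ge0 => i _; exact: dotv_ge0.
  by have := dot_Mv A w; rewrite -(vnorm_sq w) hw expr1n mulr1.
have hsup := ub_le_sup hub; have := hsup _ (ex_intro2 _ _ u hu erefl).
rewrite -/(specnorm A) /u -scalemxAr vnormZ ger0_norm ?invr_ge0 ?vnorm_ge0 //.
by rewrite mulrC -ler_pdivrMr // invf_div => h; rewrite -ler_pdivrMr // mulrC.
Qed.

Lemma eta_ge n d (G S : {set 'I_n}) a (X : 'M[R]_(n, d)) : #|S| = a ->
  specnorm (sub_rows (Vset G S) X) / Num.sqrt (lmin ((sub_rows S X)^T *m sub_rows S X))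
  <= eta_tor G a X.
Proof.
move=> hS; rewrite /eta_tor.
have hP : #|S| == a by rewrite hS.
exact: (le_bigmax_cond _ (fun S0 : {set 'I_n} => specnorm (sub_rows (Vset G S0) X) / Num.sqrt (lmin ((sub_rows S0 X)^T *m sub_rows S0 X))) hP).
Qed.

End P4.

Section P5.
Variable R : realType.
Variables (n d a : nat) (X : 'M[R]_(n, d)) (Y : 'cV[R]_n).
Variables (ht : 'cV[R]_n -> {set 'I_n}) (hht : is_HT a ht).
Hypothesis hgood : forall S : {set 'I_n}, #|S| = a -> AT X S \in unitmx.

Definition Fdef (T : {set 'I_n}) := ht (absv (Y - X *m ols T X Y)).
Definition hdef (T : {set 'I_n}) :=
  vnorm (sub_rows (Fdef T) (Y - X *m ols T X Y)).

Lemma iter_unfold k T err : torrent_iter ht X Y k.+1 T err =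
  if hdef T < err then torrent_iter ht X Y k (Fdef T) (hdef T)
  else (ols T X Y, Fdef T).
Proof. by []. Qed.

Definition Inv T err :=
  (T = [set: 'I_n]%SET /\ err = vnorm Y) \/ exists Q, T = Fdef Q /\ err = hdef Q.

Lemma iter_spec (k : nat) : forall T err, Inv T err ->
  (#|[set Q : {set 'I_n} | (hdef Q < err)%R]| < k)%N ->
  exists T' err', [/\ Inv T' err', ~~ (hdef T' < err') &
    torrent_iter ht X Y k T err = (ols T' X Y, Fdef T')].
Proof.
elim: k => [|k IH] T err hinv hk; first by [].
rewrite iter_unfold; case: ifP => hlt.
  apply: IH; first by right; exists T.
  have hp : [set Q : {set 'I_n} | hdef Q < hdef T] \proper
            [set Q : {set 'I_n} | hdef Q < err].
    apply/properP; split.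
      by apply/fintype.subsetP => Q; rewrite !inE => h; apply: lt_trans h hlt.
    by exists T; rewrite !inE ?hlt ?ltxx.
  by rewrite ltnS in hk; exact: leq_trans (proper_card hp) hk.
by exists T, err; split => //; rewrite hlt.
Qed.

Lemma sum_sub_le (S : {set 'I_n}) (F : 'I_n -> R) : (forall i, 0 <= F i) ->
  \sum_(i in S) F i <= \sum_i F i.
Proof.
move=> h0; rewrite [X in _ <= X](bigID (mem S)) /= lerDl.
by apply: sumr_ge0 => i _.
Qed.

Lemma torrent_final : [/\ #|(torrent ht X Y).2| = a,
  (torrent ht X Y).1 = ols (torrent ht X Y).2 X Y &
  (torrent ht X Y).2 = ht (absv (Y - X *m (torrent ht X Y).1))].
Proof.
have hcount : (#|[set Q : {set 'I_n} | (hdef Q < vnorm Y)%R]| < (2 ^ n).+1)%N.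
  have hsub : [set Q : {set 'I_n} | (hdef Q < vnorm Y)%R] \subset powerset [set: 'I_n]%SET.
    by apply/fintype.subsetP => Q _; rewrite inE finset.subsetT.
  rewrite ltnS; apply: leq_trans (subset_leq_card hsub) _.
  by rewrite card_powerset cardsT card_ord.
have [T' [err' [hinv hnlt heq]]] :=
  iter_spec (or_introl (conj erefl erefl)) hcount.
rewrite /torrent heq /=; split; first by have [] := hht (absv (Y - X *m ols T' X Y)).
  2: by [].
have herr : err' <= hdef T' by rewrite leNgt.
case: hinv => [[hT herr'] | [Q [hT herr']]].
- subst T'.
  have hS0 := ht_card hht 0.
  have hXinj : forall v : 'cV[R]_d, X *m v = 0 -> v = 0.
    move=> v hv.
    have h0 : AT X (ht 0) *m v = 0.
      by rewrite /AT -mulmxA -sub_rowsM hv /sub_rows mulmx0 mulmx0.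
    by rewrite -(mulKmx (hgood hS0) v) h0 mulmx0.
  have hu : AT X [set: 'I_n]%SET \in unitmx.
    by rewrite /AT sub_rowsT; exact: unit_inj hXinj.
  have hl := @lsq R n d X Y [set: 'I_n]%SET 0 hu.
  rewrite !sub_rowsT mulmx0 !subr0 in hl.
  set b := ols [set: 'I_n]%SET X Y in hl *.
  set S := Fdef [set: 'I_n]%SET in herr *.
  have hSc : #|S| = a by rewrite /S /Fdef; exact: ht_card hht _.
  have h1 : dotv (sub_rows S (Y - X *m b)) (sub_rows S (Y - X *m b)) <=
            dotv (Y - X *m b) (Y - X *m b).
    by rewrite dot_mask dot_all; apply: sum_sub_le => i; exact: sqr_ge0.
  have h2 : dotv Y Y <= dotv (sub_rows S (Y - X *m b)) (sub_rows S (Y - X *m b)).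
    move: herr; rewrite herr' /hdef -/b -/S !vnormE ler_sqrt //; exact: dotv_ge0.
  have ht0 : dotv (X *m b) (X *m b) = 0.
    apply/eqP; rewrite eq_le dotv_ge0 andbT.
    have := dotv_ge0 (X *m b); lra.
  have hb0 : b = 0 by apply: hXinj; apply: dotv_eq0.
  rewrite hb0 mulmx0 subr0 in h1 h2.
  have heqd : dotv (sub_rows S Y) (sub_rows S Y) = dotv Y Y.
    by apply/le_anti; rewrite h1 h2.
  have e : dotv Y Y - dotv (sub_rows S Y) (sub_rows S Y) =
           \sum_i ((i \notin S)%:R * (Y i 0 * Y i 0)).
    rewrite /dotv -sumrB; apply: eq_bigr => j _; rewrite !rmaskE.
    by case: (j \in S); rewrite /= ?mul1r ?mul0r ?subrr ?subr0.
  rewrite heqd subrr in e.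
  have hge : forall i : 'I_n, true -> 0 <= (i \notin S)%:R * (Y i 0 * Y i 0).
    by move=> i _; rewrite mulr_ge0 ?ler0n // -expr2 sqr_ge0.
  have hYS : forall i, i \notin S -> Y i 0 = 0.
    move=> i hi; have := @psumr_eq0P _ _ _ _ hge (esym e) i isT.
    by rewrite hi mul1r => /eqP; rewrite mulf_eq0 orbb => /eqP.
  have hMY : sub_rows S Y = Y.
    apply/matrixP => i j; rewrite ord1 rmaskE.
    by case: (boolP (i \in S)) => hi; [rewrite mul1r | rewrite mul0r hYS].
  have hXtY : X^T *m Y = 0.
    have := @normal_eq R n d X Y _ hu; rewrite !sub_rowsT -/b hb0 mulmx0 subr0 //.
  rewrite hb0 olsE ?hgood // -mulmxA tr_sub_rows hMY hXtY mulmx0 //.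
- have hcard : #|T'| = a by rewrite hT /Fdef; exact: ht_card hht _.
  have hu := hgood hcard.
  have hl := @lsq R n d X Y T' (ols Q X Y) hu.
  have h1 : hdef T' <= vnorm (sub_rows T' (Y - X *m ols T' X Y)).
    rewrite /hdef !vnormE ler_sqrt ?dotv_ge0 // !dot_mask /Fdef; exact: (ht_min hht _ hcard).
  have e1 : err' = vnorm (sub_rows T' (Y - X *m ols Q X Y)) by rewrite herr' /hdef -hT.
  have h2 : dotv (sub_rows T' (Y - X *m ols Q X Y)) (sub_rows T' (Y - X *m ols Q X Y))
         <= dotv (sub_rows T' (Y - X *m ols T' X Y)) (sub_rows T' (Y - X *m ols T' X Y)).
    have := le_trans herr h1; rewrite e1 !vnormE ler_sqrt //; exact: dotv_ge0.
  set s := sub_rows T' X *m (ols T' X Y - ols Q X Y) in hl.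
  have hs0 : s = 0.
    apply: dotv_eq0; apply/eqP; rewrite eq_le dotv_ge0 andbT.
    have := dotv_ge0 s; lra.
  have hbb : ols T' X Y = ols Q X Y.
    apply/eqP; rewrite -subr_eq0; apply/eqP.
    have h0 : AT X T' *m (ols T' X Y - ols Q X Y) = 0.
      by rewrite /AT -mulmxA -/s hs0 mulmx0.
    by rewrite -(mulKmx hu (ols T' X Y - ols Q X Y)) h0 mulmx0.
  have hF : Fdef T' = T' by rewrite {2}hT /Fdef hbb.
  by rewrite hF.
Qed.


End P5.

Unset Implicit Arguments.
Local Open Scope classical_set_scope.
Local Open Scope ring_scope.

Lemma specnorm_ge0 (R : realType) m k (A : 'M[R]_(m, k)) : 0 <= specnorm A.
Proof.
rewrite /specnorm.
set E := (fun v : 'cV[R]_k => vnorm (A *m v)) @` [set v | vnorm v = 1].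
have [[y hy]|hne] := pselect (exists y, E y).
  have [hs|hns] := pselect (has_sup E).
    apply: le_trans (ub_le_sup (proj2 hs) hy).
    by case: hy => v _ <-; exact: vnorm_ge0.
  by rewrite sup_out.
have -> : E = set0.
  by apply/seteqP; split => x hx //; exfalso; apply: hne; exists x.
by rewrite sup0.
Qed.

Lemma vnormN (R : realType) m (v : 'cV[R]_m) : vnorm (- v) = vnorm v.
Proof. by rewrite -scaleN1r vnormZ normrN1 mul1r. Qed.

Lemma sq_le_vnorm (R : realType) m p (u : 'cV[R]_m) (v : 'cV[R]_p) (t : R) :
  0 <= t -> dotv u u <= t ^+ 2 * dotv v v -> vnorm u <= t * vnorm v.
Proof.
move=> t0 h; rewrite -(ler_pXn2r (_ : 0 < 2)%N) ?nnegrE ?mulr_ge0 ?vnorm_ge0 //.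
by rewrite exprMn !vnorm_sq.
Qed.

Lemma final_alg (R : realType) (D W Z N E s t e : R) : 0 <= W -> 0 <= Z -> 0 <= N ->
  0 <= E -> 0 < s -> 0 < t -> D <= W + Z -> s * Z <= t * (N * D + E) ->
  N / s <= e -> t * e < 1 ->
  D <= W + (t * N * W + t * E) / (s * (1 - t * e)).
Proof.
move=> W0 Z0 N0 E0 s0 t0 hD hsZ hNe hte.
have hNs : N <= e * s by rewrite -ler_pdivrMr.
have hden : 0 < s * (1 - t * e) by rewrite mulr_gt0 // subr_gt0.
have p1 : t * Z * N <= t * Z * (e * s) by rewrite ler_wpM2l // mulr_ge0 // ltW.
have p2 : t * N * D <= t * N * (W + Z) by rewrite ler_wpM2l // mulr_ge0 // ltW.
have hZ : Z <= (t * N * W + t * E) / (s * (1 - t * e)).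
  rewrite ler_pdivlMr //; nra.
lra.
Qed.

Theorem theorem3p3 (R : realType) (n d : nat) (hdn : (d <= n)%N)
  (X : 'M[R]_(n, d)) (beta : 'cV[R]_d) (eps : 'cV[R]_n)
  (G : {set 'I_n}) (o : 'cV[R]_n)
  (ho : forall i, i \notin G -> o i 0 = 0)
  (c : nat) (hc : (#|G| <= c)%N)
  (ht : 'cV[R]_n -> {set 'I_n}) (hht : is_HT (n - c)%N ht)
  (hpos : forall S : {set 'I_n}, #|S| = (n - c)%N ->
            0 < lmin ((sub_rows S X)^T *m sub_rows S X))
  (heta : eta_tor G (n - c)%N X < 1 / Num.sqrt 2) :
  let Y := X *m beta + eps + o in
  let bhat := (torrent ht X Y).1 in
  let St := (torrent ht X Y).2 in
  let XS := sub_rows St X in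
  let w := invmx (XS^T *m XS) *m XS^T *m sub_rows St eps in
  vnorm (bhat - beta) <=
    vnorm w +
    (Num.sqrt 2 * specnorm (sub_rows (Vset G St) X) * vnorm w
       + Num.sqrt 2 * vnorm (sub_rows (Vset G St) eps))
    / (Num.sqrt (lmin (XS^T *m XS)) * (1 - Num.sqrt 2 * eta_tor G (n - c)%N X)).
Proof.
cbv zeta.
set Y := X *m beta + eps + o.
set bhat := (torrent ht X Y).1.
set St := (torrent ht X Y).2.
have hgood : forall S : {set 'I_n}, #|S| = (n - c)%N -> AT X S \in unitmx.
  by move=> S hS; apply: unit_inj; apply: lmin_inj (hpos S hS).
have [hcard hb hSt] := torrent_final Y hht hgood.
rewrite -/bhat -/St in hcard hb hSt.
have hu := hgood _ hcard.
set A := (sub_rows St X)^T *m sub_rows St X.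
set z := invmx A *m (sub_rows St X)^T *m sub_rows St o.
set w' := invmx A *m (sub_rows St X)^T *m sub_rows St eps.
have hdec : bhat - beta = w' + z.
  rewrite hb olsE // /Y !sub_rowsD sub_rowsM !mulmxDr.
  rewrite [invmx _ *m _ *m (_ *m beta)]mulmxA -[invmx _ *m _ *m sub_rows St X]mulmxA.
  by rewrite -/A mulVmx // mul1mx -/w' -/z [in LHS]addrC !addrA addNr add0r.
set V := Vset G St.
set r := Y - X *m bhat.
set g := X *m (bhat - beta) - eps.
have hog : o = r + g.
  by rewrite /r /g /Y mulmxBr; apply/matrixP => i j; rewrite !mxE; ring.
have hlpos : 0 < lmin A := hpos _ hcard.
set lam := lmin A in hlpos *.
set s := Num.sqrt lam.
have spos : 0 < s by rewrite sqrtr_gt0.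
have hz : s * vnorm z <= vnorm (sub_rows St o).
  rewrite mulrC -(ler_pXn2r (_ : 0 < 2)%N) ?nnegrE ?mulr_ge0 ?vnorm_ge0 ?sqrtr_ge0 //.
  rewrite exprMn !vnorm_sq (sqr_sqrtr (ltW hlpos)) mulrC.
  apply: quad_bound; rewrite -/A /z -mulmxA mulKVmx //.
have hoS : dotv (sub_rows St o) (sub_rows St o) = \sum_(i in St :&: G) o i 0 ^+ 2.
  rewrite dot_mask (big_setID G) /= [X in _ + X]big1 ?addr0 // => i.
  by rewrite !inE => /andP[hiG _]; rewrite ho // expr0n.
have hcardK : (#|St :&: G| <= #|~: G :\: St|)%N.
  have e1 := cardsID G St.
  have e2 := cardsID St (~: G).
  have e3 : #|~: G :&: St| = #|St :\: G| by rewrite finset.setDE finset.setIC.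
  have e4 := cardsC G; rewrite card_ord in e4.
  lia.
have hr : \sum_(i in St :&: G) r i 0 ^+ 2 <= \sum_(i in ~: G :\: St) r i 0 ^+ 2.
  apply: K3 hcardK _ _; last by move=> i; exact: sqr_ge0.
  move=> i j; rewrite !inE => /andP[hi _] /andP[hj _].
  by move: hi hj; rewrite hSt => hi hj; apply: (ht_sq hht).
have hrg : \sum_(i in ~: G :\: St) r i 0 ^+ 2 = \sum_(i in ~: G :\: St) g i 0 ^+ 2.
  apply: eq_bigr => i; rewrite !inE => /andP[_ hiG].
  have := congr1 (fun M : 'cV[R]_n => M i 0) hog => /=; rewrite mxE (ho _ hiG) => h.
  have -> : r i 0 = - g i 0 by lra.
  by rewrite sqrrN.
have hV : \sum_(i in V) g i 0 ^+ 2 =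
    \sum_(i in St :&: G) g i 0 ^+ 2 + \sum_(i in ~: G :\: St) g i 0 ^+ 2.
  rewrite (big_setID St) /=; congr (_ + _); apply: eq_bigl => i;
    rewrite /V /Vset !inE; by case: (i \in St); case: (i \in G).
have hMo : dotv (sub_rows St o) (sub_rows St o) <=
           2 * dotv (sub_rows V g) (sub_rows V g).
  rewrite hoS dot_mask hV.
  have step : \sum_(i in St :&: G) o i 0 ^+ 2 <=
      2 * \sum_(i in St :&: G) r i 0 ^+ 2 + 2 * \sum_(i in St :&: G) g i 0 ^+ 2.
    rewrite !mulr_sumr -big_split /=; apply: ler_sum => i _; rewrite hog mxE.
    have := sqr_ge0 (r i 0 - g i 0); rewrite !sqrrD sqrrN mulrN !mulr2n; lra.
  lra.
have hMo' : vnorm (sub_rows St o) <= Num.sqrt 2 * vnorm (sub_rows V g).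
  by apply: sq_le_vnorm; rewrite ?sqrtr_ge0 // sqr_sqrtr.
have hg : vnorm (sub_rows V g) <=
    specnorm (sub_rows V X) * vnorm (bhat - beta) + vnorm (sub_rows V eps).
  rewrite /g sub_rowsB sub_rowsM; apply: (le_trans (vnorm_triangle _ _)).
  by rewrite vnormN lerD2r specnormP.
have heta' := eta_ge G X hcard.
rewrite -/V -/A -/lam -/s in heta'.
have hdec' : vnorm (bhat - beta) <= vnorm w' + vnorm z by rewrite hdec vnorm_triangle.
apply: (@final_alg R _ _ (vnorm z)); rewrite ?vnorm_ge0 ?specnorm_ge0 ?sqrtr_gt0 //.
- apply: (le_trans hz); apply: (le_trans hMo').
  by rewrite ler_wpM2l ?sqrtr_ge0.
- have ht2 : 0 < Num.sqrt 2 :> R by rewrite sqrtr_gt0.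
  by rewrite (ltr_pdivlMr _ _ ht2) in heta; rewrite mulrC.
Qed.
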